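(* Let $n\ge2$, $0\le\delta<\frac1n$, let $P^0=[d_1\ \cdots\ d_{n+1}]$ be the canonical uniform simplex, and let $P^\delta=[d_1^\delta\ \cdots\ d^\delta_{n+1}]$ with $d_1^\delta=d_1$ and $d_i^\delta=\alpha(d_i+\delta e_1)$ for $2\le i\le n+1$, where $$\alpha=\frac{n}{\sqrt{n^2\delta^2-2n\delta+n^2}},\qquad \beta=\alpha^2\left(\frac{n\delta^2-2\delta-1}{n}\right),\qquad \gamma=-\alpha(1-\delta n)-(n-1).$$ Then: (i) $\alpha=\frac{1}{\|d_i+\delta e_1\|}$ for all $i\in\{2,\dots,n+1\}$; (ii) $\beta=(d_j^\delta)^\top d_k^\delta$ for all $2\le j,k\le n+1$ with $j\ne k$; (iii) $\beta\le-\frac1n$ and $1+\frac{\beta n}{1-\beta}>0$; (iv) $-n\le\gamma<0$.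
   Context: The canonical uniform simplex is the $n\times(n+1)$ matrix $P^0$ defined as follows, with $a_i=\sqrt{\frac{(n-i+1)(n+1)}{n(n-i+2)}}$ for $i=1,\dots,n$: for $1\le j\le n$, column $j$ has entry $-\frac{a_i}{n-i+1}$ in row $i<j$, entry $a_j$ in row $j$, and $0$ in rows $i>j$; column $n+1$ has entry $-\frac{a_i}{n-i+1}$ in every row $i$. $e_1$ is the first standard basis vector. *)

(* Defs.v *)
From HB Require Import structures.
From mathcomp Require Import all_boot all_order all_algebra.
Set Implicit Arguments. Unset Strict Implicit. Unset Printing Implicit Defensive.
Import Order.TTheory GRing.Theory Num.Theory.
Local Open Scope ring_scope.

Section Simplex.
Variable R : rcfType.

Definition dotv (m : nat) (u v : 'cV[R]_m) : R := (u^T *m v) 0 0.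
Definition normv (m : nat) (v : 'cV[R]_m) : R := Num.sqrt (dotv v v).

(* a_i of the paper, with 0-based index i (paper index i+1):
   a_{i+1} = sqrt((n-i)(n+1) / (n(n-i+1))). *)
Definition simplex_a (n i : nat) : R :=
  Num.sqrt (((n - i)%:R * (n.+1)%:R) / (n%:R * (n - i).+1%:R)).

Definition P0 (n : nat) : 'M[R]_(n, n.+1) :=
  \matrix_(i < n, j < n.+1)
    if (j < n)%N then
      (if (i < j)%N then - simplex_a n i / (n - i)%:R
       else if (i == j :> nat) then simplex_a n i else 0)
    else - simplex_a n i / (n - i)%:R.

(* d_{j+1} = column j of P^0 *)
Definition dcol (n : nat) (j : 'I_n.+1) : 'cV[R]_n := col j (P0 n).

Definition e1 (n : nat) : 'cV[R]_n := \col_(i < n) ((i == 0 :> nat)%:R).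

Definition alpha (n : nat) (delta : R) : R :=
  n%:R / Num.sqrt (n%:R ^+ 2 * delta ^+ 2 - 2 * n%:R * delta + n%:R ^+ 2).

Definition beta (n : nat) (delta : R) : R :=
  alpha n delta ^+ 2 * ((n%:R * delta ^+ 2 - 2 * delta - 1) / n%:R).

Definition gamma (n : nat) (delta : R) : R :=
  - alpha n delta * (1 - delta * n%:R) - (n%:R - 1).

Definition Pdelta (n : nat) (delta : R) : 'M[R]_(n, n.+1) :=
  \matrix_(i < n, j < n.+1)
    if (j == 0 :> nat) then @dcol n j i 0
    else alpha n delta * (@dcol n j i 0 + delta * e1 n i 0).

Definition ddelta (n : nat) (delta : R) (j : 'I_n.+1) : 'cV[R]_n :=
  col j (Pdelta n delta).

End Simplex.
Arguments alpha {R} n delta.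
Arguments beta {R} n delta.
Arguments gamma {R} n delta.
Arguments Pdelta {R} n delta.
Arguments ddelta {R} n delta j.
Arguments dcol {R} n j.
Arguments e1 {R} n.
Arguments simplex_a {R} n i.
Arguments P0 {R} n.

(* Main.v *)
Require Import Defs.
From HB Require Import structures.
From mathcomp Require Import all_boot all_order all_algebra.
From mathcomp Require Import ring lra.
Import Order.TTheory GRing.Theory Num.Theory.
Local Open Scope ring_scope.

Section H.
Variable R : rcfType.

Lemma dotvE m (u v : 'cV[R]_m) : dotv u v = \sum_(i < m) u i 0 * v i 0.
Proof. by rewrite /dotv !mxE; apply: eq_bigr => i _; rewrite mxE. Qed.

Lemma sum_split (f g : nat -> R) (j n : nat) : (j < n)%N ->
  \sum_(i < n) (if (i < j)%N then f i else if (i == j :> nat) then g i else 0)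
  = \sum_(0 <= i < j) f i + g j.
Proof.
move=> jn.
rewrite -(big_mkord xpredT (fun i => if (i < j)%N then f i else if (i == j :> nat) then g i else 0)).
rewrite (big_cat_nat (n:=j)) ?(ltnW jn) // /= (big_ltn jn) ltnn eqxx addrA.
rewrite [X in _ + _ + X]big1_seq ?addr0; last first.
  move=> i /andP[_]; rewrite mem_index_iota => /andP[ji _].
  by rewrite ltnNge (ltnW ji) /= gtn_eqF.
congr (_ + _); rewrite big_nat_cond [RHS]big_nat_cond.
by apply: eq_bigr => i /andP[/andP[_ ->] _].
Qed.

Variable n : nat.
Hypothesis n0 : (0 < n)%N.

Lemma nR0 : n%:R != 0 :> R.
Proof. by rewrite pnatr_eq0 -lt0n. Qed.

Lemma a_sq i : (i < n)%N -> simplex_a n i ^+ 2 =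
  ((n - i)%:R * n.+1%:R) / (n%:R * (n - i).+1%:R) :> R.
Proof.
move=> ilt; rewrite /simplex_a sqr_sqrtr //.
by rewrite divr_ge0 // mulr_ge0.
Qed.

Lemma natB i : (i <= n)%N -> (n - i)%:R = n%:R - i%:R :> R.
Proof. by move=> h; rewrite natrB. Qed.

Lemma natBS i : (i <= n)%N -> (n - i).+1%:R = n%:R - i%:R + 1 :> R.
Proof. by move=> h; rewrite -addn1 natrD natrB. Qed.

Lemma tele j : (j <= n)%N -> \sum_(0 <= i < j) (simplex_a n i / (n - i)%:R) ^+ 2
  = n.+1%:R / (n%:R * (n - j).+1%:R) - 1 / n%:R :> R.
Proof.
elim: j => [|j IH] jn.
  rewrite big_nil subn0 -addn1 natrD; field.
  by rewrite nR0 /= -[1]/(1%:R) -natrD pnatr_eq0 addn1.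
rewrite big_nat_recr //= IH ?(ltnW jn) // expr_div_n a_sq //.
rewrite subnSK // !natBS ?(ltnW jn) // natB ?(ltnW jn) //.
have hj : j.+1%:R <= n%:R :> R by rewrite ler_nat.
rewrite -addn1 natrD in hj.
have hn : 1 <= n%:R :> R by rewrite ler1n.
rewrite -addn1 natrD.
field.
rewrite nR0 /=.
by apply/andP; split; apply/lt0r_neq0; lra.
Qed.

Lemma dcolE (j : 'I_n.+1) (i : 'I_n) : dcol n j i 0 =
  if (j < n)%N then
      (if (i < j)%N then - (simplex_a n i / (n - i)%:R)
       else if (i == j :> nat) then simplex_a n i else 0)
  else - (simplex_a n i / (n - i)%:R) :> R.
Proof. by rewrite /dcol !mxE mulNr. Qed.

Lemma norm_col (j : 'I_n.+1) : dotv (dcol n j) (dcol n j) = 1 :> R.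
Proof.
rewrite dotvE; case: (ltnP j n) => jn.
  rewrite (eq_bigr (fun i : 'I_n => if (i < j)%N then (simplex_a n i / (n - i)%:R) ^+ 2
     else if (i == j :> nat) then simplex_a n i ^+ 2 else 0 :> R)); last first.
    move=> i _; rewrite dcolE jn.
    case: ltnP => ij; first by rewrite mulrNN expr2.
    by case: eqP => [->|_]; rewrite ?mul0r ?expr2.
  rewrite (sum_split (fun i => (simplex_a n i / (n - i)%:R) ^+ 2) (fun i => simplex_a n i ^+ 2) _ _ jn) tele ?(ltnW jn) // a_sq //.
  rewrite natBS ?(ltnW jn) // natB ?(ltnW jn) //.
  have hj : j%:R + 1 <= n%:R :> R by rewrite natr1 ler_nat.
  field.
  by rewrite nR0 andbT; apply/lt0r_neq0; lra.
rewrite (eq_bigr (fun i : 'I_n => (simplex_a n i / (n - i)%:R) ^+ 2 :> R)); last first.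
  by move=> i _; rewrite dcolE ltnNge jn /= mulrNN expr2.
rewrite -(big_mkord xpredT (fun i => (simplex_a n i / (n - i)%:R) ^+ 2)) tele //.
rewrite subnn; field; exact: nR0.
Qed.

Lemma dot_col (j k : 'I_n.+1) : (j < k)%N ->
  dotv (dcol n j) (dcol n k) = - 1 / n%:R :> R.
Proof.
move=> jk; have jn : (j < n)%N by apply: (leq_trans jk); rewrite -ltnS.
rewrite dotvE.
rewrite (eq_bigr (fun i : 'I_n => if (i < j)%N then (simplex_a n i / (n - i)%:R) ^+ 2
     else if (i == j :> nat) then - (simplex_a n i ^+ 2 / (n - i)%:R) else 0 :> R)); last first.
  move=> i _; rewrite !dcolE jn.
  case: ltnP => ij.
    have -> : (i < k)%N by apply: ltn_trans jk.
    by case: (k < n)%N; rewrite mulrNN expr2.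
  case: eqP => [ieq|_]; last by rewrite mul0r.
  have -> : (i < k)%N by rewrite ieq.
  by case: (k < n)%N; rewrite mulrN expr2 mulrA.
rewrite (sum_split (fun i => (simplex_a n i / (n - i)%:R) ^+ 2) (fun i => - (simplex_a n i ^+ 2 / (n - i)%:R)) _ _ jn) tele ?(ltnW jn) // a_sq //.
rewrite natBS ?(ltnW jn) // natB ?(ltnW jn) //.
have hj : j%:R + 1 <= n%:R :> R by rewrite natr1 ler_nat.
field.
by rewrite nR0 /=; apply/andP; split; apply/lt0r_neq0; lra.
Qed.

Lemma a0 : simplex_a n 0 = 1 :> R.
Proof.
rewrite /simplex_a subn0 mulfV ?sqrtr1 //.
by rewrite mulf_neq0 ?nR0 // pnatr_eq0.
Qed.

Lemma e1E (i : 'I_n) : e1 n i 0 = (i == 0 :> nat)%:R :> R.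
Proof. by rewrite /e1 mxE. Qed.

Lemma dot_e1 (u : 'cV[R]_n) : dotv u (e1 n) = u (Ordinal n0) 0.
Proof.
rewrite dotvE (bigD1 (Ordinal n0)) //= e1E /= mulr1 big1 ?addr0 // => i ni.
rewrite e1E; case: eqP => [h|_]; last by rewrite mulr0.
by exfalso; move/eqP: ni; apply; apply: val_inj.
Qed.

Lemma e1e1 : dotv (e1 n) (e1 n) = 1 :> R.
Proof. by rewrite dot_e1 e1E. Qed.

Lemma dcol_e1 (j : 'I_n.+1) : (1 <= j)%N -> dotv (dcol n j) (e1 n) = - 1 / n%:R :> R.
Proof.
move=> j1; rewrite dot_e1 dcolE /= j1 a0 subn0 mulNr.
by case: (j < n)%N.
Qed.
End H.

Lemma dotvC (R : rcfType) m (u v : 'cV[R]_m) : dotv u v = dotv v u.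
Proof. by rewrite !dotvE; apply: eq_bigr => i _; rewrite mulrC. Qed.

Lemma dotv_exp (R : rcfType) m (u v e : 'cV[R]_m) (c : R) :
  dotv (u + c *: e) (v + c *: e) = dotv u v + c * (dotv u e + dotv v e) + c ^+ 2 * dotv e e.
Proof.
rewrite !dotvE -big_split /= !mulr_sumr -!big_split /=.
by apply: eq_bigr => i _; rewrite !mxE; ring.
Qed.

Lemma dotvZ (R : rcfType) m (u v : 'cV[R]_m) (c : R) :
  dotv (c *: u) (c *: v) = c ^+ 2 * dotv u v.
Proof.
rewrite !dotvE mulr_sumr.
by apply: eq_bigr => i _; rewrite !mxE; ring.
Qed.

Lemma ddeltaE (R : rcfType) n (delta : R) (j : 'I_n.+1) : (1 <= j)%N ->
  ddelta n delta j = alpha n delta *: (dcol n j + delta *: e1 n).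
Proof.
move=> j1; apply/matrixP => i k; rewrite !mxE.
rewrite eqn0Ngt j1 /=.
by [].
Qed.

Theorem lemma9 (R : rcfType) (n : nat) (delta : R) :
  (2 <= n)%N -> 0 <= delta -> delta < 1 / n%:R ->
  [/\ (forall i : 'I_n.+1, (1 <= i)%N ->
         alpha n delta = 1 / normv (dcol n i + delta *: e1 n)),
      (forall j k : 'I_n.+1, (1 <= j)%N -> (1 <= k)%N -> j != k ->
         beta n delta = dotv (ddelta n delta j) (ddelta n delta k)),
      beta n delta <= - (1 / n%:R) /\
        0 < 1 + beta n delta * n%:R / (1 - beta n delta)
    & - n%:R <= gamma n delta /\ gamma n delta < 0].
Proof.
move=> n2 d0 dlt.
have n0 : (0 < n)%N by apply: ltnW.
have xn0 := @nR0 R n n0.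
have x2 : 2 <= n%:R :> R by rewrite (ler_nat R 2 n).
have x0 : 0 < n%:R :> R by lra.
have dx : delta * n%:R < 1 by rewrite -ltr_pdivlMr.
set x := n%:R in xn0 x2 x0 dx dlt *.
have xd0 : 0 <= delta * x by rewrite mulr_ge0 // ltW.
set D := x ^+ 2 * delta ^+ 2 - 2 * x * delta + x ^+ 2.
have Dpos : 0 < D by rewrite /D; nra.
have aE : alpha n delta = x / Num.sqrt D by [].
set s := Num.sqrt D in aE.
have hs : 0 < s by rewrite sqrtr_gt0.
have hs2 : s ^+ 2 = D by rewrite sqr_sqrtr // ltW.
have sn0 : s != 0 by rewrite gt_eqF.
split.
- move=> i i1; rewrite /normv dotv_exp (@norm_col R n n0) (@dcol_e1 R n n0) // (@e1e1 R n n0).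
  have -> : 1 + delta * (-1 / x + -1 / x) + delta ^+ 2 * 1 = (s / x) ^+ 2.
    by rewrite expr_div_n hs2 /D; field.
  rewrite sqrtr_sqr ger0_norm ?divr_ge0 ?ltW // aE; field.
  by rewrite sn0 xn0.
- move=> j k j1 k1 jk.
  have hjk : dotv (dcol n j) (dcol n k) = -1 / x :> R.
    case: (ltngtP j k) => h; first exact: (@dot_col R n n0).
      by rewrite dotvC; apply: (@dot_col R n n0).
    by move/eqP: jk; case; apply: val_inj.
  rewrite !ddeltaE // dotvZ dotv_exp hjk !(@dcol_e1 R n n0) // (@e1e1 R n n0) /beta.
  field; exact: xn0.
set a := alpha n delta.
set b := beta n delta.
have hb : b * x = a ^+ 2 * (x * delta ^+ 2 - 2 * delta - 1).
  by rewrite /b /beta -/a -/x; field.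
have ha2 : a ^+ 2 * D = x ^+ 2 by rewrite /a aE expr_div_n hs2; field; rewrite /D; apply: lt0r_neq0.
have ha : 0 < a by rewrite /a aE divr_gt0.
have hbD : b * D = x * (x * delta ^+ 2 - 2 * delta - 1).
  apply: (mulIf xn0).
  transitivity (b * x * D); first ring.
  rewrite hb.
  transitivity (a ^+ 2 * D * (x * delta ^+ 2 - 2 * delta - 1)); first ring.
  rewrite ha2; ring.
have hbx : b * x <= -1.
  rewrite -(ler_pM2r Dpos).
  have p : 0 <= delta * x * (x + 1) * (2 - delta * x).
    by rewrite !mulr_ge0 //; lra.
  have -> : b * x * D = x * (b * D) by ring.
  rewrite hbD /D; nra.
have hb1 : b <= - (1 / x).
  by rewrite -(ler_pM2r x0) mulNr mul1r mulVf.
have hbneg : b < 0.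
  apply: (le_lt_trans hb1); rewrite oppr_lt0 divr_gt0 //.
split => //.
  have -> : 1 + b * x / (1 - b) = (1 - b + b * x) / (1 - b).
    by field; apply: lt0r_neq0; lra.
  apply: divr_gt0; last lra.
  have q : 0 < x * (delta * x - 1) ^+ 2.
    have -> : delta * x - 1 = - (1 - delta * x) by ring.
    by rewrite sqrrN mulr_gt0 // expr2 mulr_gt0 //; lra.
  have e : (1 - b + b * x) * D = x * (delta * x - 1) ^+ 2.
    transitivity (D + (x - 1) * (b * D)); first ring.
    rewrite hbD /D; ring.
  nra.
rewrite /gamma -/x.
set a := alpha n delta.
have ha : 0 < a by rewrite /a aE divr_gt0.
have hax : 0 < a * (1 - delta * x) by rewrite mulr_gt0 //; lra.
split; last lra.
have hle : x * (1 - delta * x) <= s.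
  have h0 : 0 <= x * (1 - delta * x) by rewrite mulr_ge0 //; lra.
  rewrite -(ger0_norm h0) -sqrtr_sqr /s ler_wsqrtr // /D.
  have p : 0 <= delta * x * (x ^+ 2 - 1) * (2 - delta * x).
    by rewrite !mulr_ge0 //; nra.
  nra.
have : a * (1 - delta * x) <= 1.
  by rewrite /a aE mulrAC ler_pdivrMr // mul1r.
lra.
Qed.
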